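(* Let $p,q\in\mathbb{N}$ be coprime, $k\in\mathbb{N}$ squarefree, $m=-pk$, $n=qk$, and let $P\in E(m,n)(\mathbb{Q})$ be a rational point which is neither the neutral element nor one of the three points of order $2$. Let $(X_0:X_1:X_2:X_3)=\psi(P)\in Q(m,n)(\mathbb{Q})$ (so $X_1\neq0$), put $\alpha=X_2/X_1$, $\beta=X_0/X_1$, $\gamma=X_3/X_1$, so that $\alpha^2=\beta^2-pk$ and $\gamma^2=\beta^2+qk$ (the associated triple of rational squares $\alpha^2\le\beta^2<\gamma^2$ in arithmetic progression of step $k$), and let $\Delta$ be the triangle with sides $a=|\gamma|+|\alpha|$, $b=|\gamma|-|\alpha|$, $c=2|\beta|$, whose angle $\theta$ between the sides $a$ and $b$ satisfies $\cos\theta=(q-p)/(q+p)$. Then the following are equivalent: (i) $P$ has order $4$; (ii) $\alpha^2=0$, i.e. the triple of squares contains $0$; (iii) $a=b$, i.e. $\Delta$ is isosceles with the angle $\theta$ between its two equal sides.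
   Context: $E(m,n)$ is the elliptic curve $y^2=x(x+m)(x+n)$ (projectively $Y^2T=X(X+mT)(X+nT)$ with coordinates $(T:X:Y)$), with neutral element the point at infinity and points of order 2 $(0,0),(-m,0),(-n,0)$. $Q(m,n)\subset\mathbb{P}^3$ is the curve $X_0^2+mX_1^2=X_2^2,\ X_0^2+nX_1^2=X_3^2$. $\psi:E(m,n)\to Q(m,n)$ is the isomorphism of curves extending the rational map $(T:X:Y)\mapsto\bigl(-(X+mT)(Y^2-m(X+nT)^2) : 2Y(X+nT)(X+mT) : -(X+mT)(Y^2+m(X+nT)^2) : -(X+nT)(Y^2+n(X+mT)^2)\bigr)$; it maps the neutral element and the three points of order 2 to the points $(1:0:\pm1:\pm1)$ and all other rational points to points with $X_1\neq0$. *)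

(* Defs.v *)
From HB Require Import structures.
From mathcomp Require Import all_boot all_order all_algebra.
Set Implicit Arguments. Unset Strict Implicit. Unset Printing Implicit Defensive.
Import Order.TTheory GRing.Theory Num.Theory.
Local Open Scope ring_scope.

Definition squarefree (k : nat) : Prop :=
  forall p : nat, prime p -> ~ (p * p %| k)%N.

(* Points of E(m,n) : y^2 = x (x+m) (x+n) over Q, in projective closure:
   None is the point at infinity (neutral element), Some (x,y) the affine
   point (T:X:Y) = (1:x:y). *)
Definition ecpt := option (rat * rat).

Definition on_E (m n : rat) (P : ecpt) : Prop :=
  match P with
  | None => True
  | Some (x, y) => y ^+ 2 = x * (x + m) * (x + n)
  end.

(* Chord-tangent group law on y^2 = x^3 + a2 x^2 + a4 x with
   a2 = m + n, a4 = m n, neutral element the point at infinity. *)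
Definition ec_add (m n : rat) (P Q : ecpt) : ecpt :=
  match P, Q with
  | None, _ => Q
  | _, None => P
  | Some (x1, y1), Some (x2, y2) =>
      if (x1 == x2) && (y1 == - y2) then None
      else
        let l := if x1 == x2
                 then (3 * x1 ^+ 2 + 2 * (m + n) * x1 + m * n) / (2 * y1)
                 else (y2 - y1) / (x2 - x1) in
        let x3 := l ^+ 2 - (m + n) - x1 - x2 in
        Some (x3, - (l * (x3 - x1) + y1))
  end.

Fixpoint ec_mul (m n : rat) (j : nat) (P : ecpt) : ecpt :=
  match j with
  | O => None
  | S j' => ec_add m n P (ec_mul m n j' P)
  end.

Definition ec_order (m n : rat) (P : ecpt) (d : nat) : Prop :=
  (0 < d)%N /\ ec_mul m n d P = None /\
  (forall j : nat, (0 < j)%N -> (j < d)%N -> ec_mul m n j P <> None).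

(* psi : E(m,n) -> Q(m,n), evaluated at an affine point (1:x:y) via the
   defining rational map (valid whenever the result is nonzero, in particular
   at all points other than O and the 2-torsion points). *)
Definition psi (m n x y : rat) : rat * rat * rat * rat :=
  (- (x + m) * (y ^+ 2 - m * (x + n) ^+ 2),
   2 * y * (x + n) * (x + m),
   - (x + m) * (y ^+ 2 + m * (x + n) ^+ 2),
   - (x + n) * (y ^+ 2 + n * (x + m) ^+ 2)).

(* Main.v *)
Require Import Defs.
From HB Require Import structures.
From mathcomp Require Import all_boot all_order all_algebra.
From mathcomp Require Import ring lra.
Import Order.TTheory GRing.Theory Num.Theory.
Local Open Scope ring_scope.

Lemma key (m n x y : rat) : m < 0 -> 0 < n -> y ^+ 2 = x * (x + m) * (x + n) ->
  y != 0 -> x + m != 0 ->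
  (ec_order m n (Some (x, y)) 4 <-> x ^+ 2 + 2 * m * x + m * n = 0).
Proof.
move=> hm hn E Hy Hxm.
set F := 3 * x ^+ 2 + 2 * (m + n) * x + m * n.
set lam := F / (2 * y).
have L : 2 * y * lam = F by rewrite /lam mulrC divfK // mulf_neq0.
set x3 := lam ^+ 2 - (m + n) - x - x.
set y3 := - (lam * (x3 - x) + y).
have C3 : y3 ^+ 2 = x3 * (x3 + m) * (x3 + n).
  have -> : y3 ^+ 2 = x3 * (x3 + m) * (x3 + n) + (y ^+ 2 - x * (x + m) * (x + n))
     + (2 * y * lam - F) * (x3 - x) by rewrite /y3 /x3 /F; ring.
  by rewrite E L !subrr mul0r !addr0.
have F2 : 4 * y ^+ 2 * x3 = (x ^+ 2 - m * n) ^+ 2.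
  have -> : 4 * y ^+ 2 * x3 = (2 * y * lam) ^+ 2 - 4 * y ^+ 2 * (m + n + 2 * x)
    by rewrite /x3; ring.
  by rewrite L E /F; ring.
have Hyy : (y == - y) = false.
  by rewrite -addr_eq0 -mulr2n mulrn_eq0 /= (negbTE Hy).
have D2 : ec_mul m n 2 (Some (x, y)) = Some (x3, y3).
  by rewrite /= eqxx Hyy /=.
have eqS : forall j, ec_mul m n j.+1 (Some (x, y)) = ec_add m n (Some (x, y)) (ec_mul m n j (Some (x, y))) by [].
split.
  case=> _ [H4 Hne]; have H3 := Hne 3%N isT isT.
  rewrite (eqS 3%N) (eqS 2%N) D2 in H4; rewrite (eqS 2%N) D2 in H3.
  case: (eqVneq x x3) => [ex|nex].
    exfalso; apply: H3.
    have hy : y == - y3 by rewrite /y3 -ex subrr mulr0 add0r opprK.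
    by rewrite /= ex eqxx -ex hy.
  move: H4 H3; rewrite /= (negbTE nex) /=.
  set l := (y3 - y) / (x3 - x).
  set x4 := l ^+ 2 - (m + n) - x - x3.
  set y4 := - (l * (x4 - x) + y).
  case: (eqVneq x x4) => [ex4 _ _|_ //].
  have dx4 : x4 = l ^+ 2 - (m + n) - x - x3 by [].
  have dl : l = (y3 - y) / (x3 - x) by [].
  have dy3 : y3 = - (lam * (x3 - x) + y) by [].
  clearbody y4 x4 l y3 x3 lam.
  have hl2 : l ^+ 2 - (m + n) - 2 * x - x3 = 0.
    have e : x4 - x = 0 by rewrite -ex4 subrr.
    have -> : l ^+ 2 - (m + n) - 2 * x - x3 = x4 - x by rewrite dx4; ring.
    exact: e.
  have Hu : x3 - x != 0 by rewrite subr_eq0 eq_sym.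
  have Hl : l * (x3 - x) = y3 - y by rewrite dl divfK.
  have Hl' : y + l * (x3 - x) = y3 by rewrite Hl addrC subrK.
  have K : (2 * y * l - F) * (x3 - x) = 0.
    have -> : (2 * y * l - F) * (x3 - x) = ((y + l * (x3 - x)) ^+ 2 - x3 * (x3 + m) * (x3 + n))
      - (y ^+ 2 - x * (x + m) * (x + n))
      - (l ^+ 2 - (m + n) - 2 * x - x3) * (x3 - x) ^+ 2 by rewrite /F; ring.
    by rewrite Hl' hl2 E C3 !subrr mul0r subr0.
  move/eqP: K; rewrite mulf_eq0 (negbTE Hu) orbF subr_eq0 -L => /eqP K.
  have ell : l = lam by apply: (mulfI _ K); rewrite mulf_neq0.
  have hy3 : y3 = 0.
    have h1 : y3 = y + lam * (x3 - x) by rewrite -ell Hl'.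
    have h2 : y3 + y3 = 0 by rewrite {1}h1 dy3; ring.
    by move/eqP: h2; rewrite -mulr2n mulrn_eq0 /= => /eqP.
  move: C3; rewrite hy3 expr0n /= => /esym/eqP; rewrite !mulf_eq0 -orbA.
  have y2p : 0 < y ^+ 2 by rewrite exprn_even_gt0.
  case/or3P => /eqP h.
  - exfalso; move: F2; rewrite h mulr0 => /esym/eqP; rewrite sqrf_eq0 subr_eq0 => /eqP h'.
    have : 0 <= x ^+ 2 by apply: sqr_ge0.
    have mn0 : m * n < 0 by rewrite pmulr_llt0.
    by rewrite h' leNgt mn0.
  - apply/eqP; rewrite -sqrf_eq0; apply/eqP.
    have -> : (x ^+ 2 + 2 * m * x + m * n) ^+ 2 = (x ^+ 2 - m * n) ^+ 2 + 4 * m * (x * (x + m) * (x + n)) by ring.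
    rewrite -E -F2; have -> : x3 = - m by apply/eqP; rewrite -addr_eq0 h.
    ring.
  - exfalso; have hx3 : x3 = - n by apply/eqP; rewrite -addr_eq0 h.
    have : 0 <= (x ^+ 2 - m * n) ^+ 2 by apply: sqr_ge0.
    have : 4 * y ^+ 2 * (- n) < 0 by rewrite pmulr_rlt0 ?oppr_lt0 // mulr_gt0.
    by rewrite -F2 hx3 ltNge => /negP.
move=> H.
have y2p : 0 < y ^+ 2 by rewrite exprn_even_gt0.
have hx3 : x3 = - m.
  have h4 : 4 * y ^+ 2 * x3 = 4 * y ^+ 2 * (- m).
    rewrite F2; apply/eqP; rewrite -subr_eq0; apply/eqP.
    have -> : (x ^+ 2 - m * n) ^+ 2 - 4 * y ^+ 2 * - m = (x ^+ 2 + 2 * m * x + m * n) ^+ 2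
      by rewrite E; ring.
    by rewrite H expr0n.
  by apply: (mulfI _ h4); rewrite mulf_neq0 // gt_eqF.
have hy3 : y3 = 0.
  by apply/eqP; rewrite -sqrf_eq0 C3 hx3 addNr mulr0 mul0r.
rewrite hx3 hy3 in D2.
set l := (0 - y) / (- m - x).
have Hl : l * (x + m) = y.
  rewrite /l; have -> : - m - x = - (x + m) by ring.
  by rewrite invrN mulrN mulNr divfK // sub0r opprK.
set x4 := l ^+ 2 - (m + n) - x - - m.
have hx4 : x4 = x.
  have h : (x + m) ^+ 2 * (x4 - x) = 0.
    have -> : (x + m) ^+ 2 * (x4 - x) = (l * (x + m)) ^+ 2 - (x + m) ^+ 2 * (n + 2 * x) by rewrite /x4; ring.
    rewrite Hl E.
    have -> : x * (x + m) * (x + n) - (x + m) ^+ 2 * (n + 2 * x) = - (x + m) * (x ^+ 2 + 2 * m * x + m * n) by ring.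
    by rewrite H mulr0.
  apply/eqP; rewrite -subr_eq0; move/eqP: h; rewrite mulf_eq0 sqrf_eq0 (negbTE Hxm) //.
have Hxm' : (x == - m) = false by apply/negbTE; rewrite -addr_eq0.
have D3 : ec_mul m n 3 (Some (x, y)) = Some (x4, - (l * (x4 - x) + y)).
  by rewrite eqS D2 /= Hxm' /=.
split => //; split.
  by rewrite eqS D3 /= hx4 subrr mulr0 add0r opprK !eqxx.
case=> [//|[|[|[|j]]]] // _ _.
- by rewrite D2.
- by rewrite D3.
Qed.

Theorem theorem4p6 (p q k : nat) (x y : rat) :
  (0 < p)%N -> (0 < q)%N -> (0 < k)%N ->
  coprime p q -> squarefree k ->
  let m : rat := - (p * k)%:R in
  let n : rat := (q * k)%:R in
  on_E m n (Some (x, y)) ->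
  (x, y) <> (0, 0) -> (x, y) <> (- m, 0) -> (x, y) <> (- n, 0) ->
  let '(X0, X1, X2, X3) := psi m n x y in
  let alpha := X2 / X1 in
  let beta := X0 / X1 in
  let gamma := X3 / X1 in
  let a := `|gamma| + `|alpha| in
  let b := `|gamma| - `|alpha| in
  (ec_order m n (Some (x, y)) 4 <-> alpha ^+ 2 = 0) /\
  (alpha ^+ 2 = 0 <-> a = b).
Proof.
move=> hp hq hk _ _ m n E h1 h2 h3.
have hm : m < 0 by rewrite /m oppr_lt0 ltr0n muln_gt0 hp hk.
have hn : 0 < n by rewrite /n ltr0n muln_gt0 hq hk.
clearbody m n.
rewrite /on_E in E.
rewrite /psi.
have Hy : y != 0.
  case: (eqVneq y 0) => [y0|//]; exfalso.
  move: E; rewrite y0 expr0n => /esym/eqP; rewrite !mulf_eq0 -orbA.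
  case/or3P => /eqP h.
  - by apply: h1; rewrite h y0.
  - by apply: h2; rewrite y0; congr (_, _); apply/eqP; rewrite -addr_eq0 h.
  - by apply: h3; rewrite y0; congr (_, _); apply/eqP; rewrite -addr_eq0 h.
have Hxm : x + m != 0.
  by apply/eqP => h; move: E; rewrite h mulr0 mul0r => /eqP; rewrite sqrf_eq0 (negbTE Hy).
have Hxn : x + n != 0.
  by apply/eqP => h; move: E; rewrite h mulr0 => /eqP; rewrite sqrf_eq0 (negbTE Hy).
have Hden : (2 * y * (x + n) * (x + m) == 0) = false.
  by apply/negbTE; rewrite !mulf_neq0.
have Hnum : y ^+ 2 + m * (x + n) ^+ 2 = (x + n) * (x ^+ 2 + 2 * m * x + m * n)
  by rewrite E; ring.
have HA : ((- (x + m) * (y ^+ 2 + m * (x + n) ^+ 2) / (2 * y * (x + n) * (x + m))) ^+ 2 == 0)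
   = (x ^+ 2 + 2 * m * x + m * n == 0).
  by rewrite sqrf_eq0 mulf_eq0 invr_eq0 Hden orbF mulf_eq0 oppr_eq0 (negbTE Hxm) Hnum
    mulf_eq0 (negbTE Hxn).
have Ek := (@key m n x y hm hn E Hy Hxm).
split.
  split => h.
    by apply/eqP; rewrite HA; apply/eqP; apply/Ek.
  by apply/Ek; apply/eqP; rewrite -HA; apply/eqP.
split => h.
  by move/eqP: h; rewrite sqrf_eq0 => /eqP ->; rewrite normr0 oppr0 !addr0.
move/addrI: h => h.
suff: `|- (x + m) * (y ^+ 2 + m * (x + n) ^+ 2) / (2 * y * (x + n) * (x + m))| +
      `|- (x + m) * (y ^+ 2 + m * (x + n) ^+ 2) / (2 * y * (x + n) * (x + m))| = 0.
  by move/eqP; rewrite -mulr2n mulrn_eq0 /= normr_eq0 => /eqP ->; rewrite expr0n.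
by rewrite {1}h addNr.
Qed.
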